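(* Let $r\ge 1$ and let $x_0,y_0$ be positive integers. Let $p_r(x_0,y_0;x,y)$ denote the probability that the CA competition process with fitness ratio $r$ started at $(x_0,y_0)$ is at state $(x,y)$ at time $x+y-x_0-y_0$. Then for all integers $k\ge0$, $h\ge0$, \[ p_r(x_0,y_0;x_0+k,y_0+h)\ \le\ \frac{(x_0)_k\,(y_0)_h}{(r^{-1})_k\,(rx_0+y_0)_h}. \]
   Context: The CA competition process with fitness ratio $r\ge 1$ started at $(x_0,y_0)$ is the discrete-time Markov chain $\{(X_t,Y_t)\}_{t\ge0}$ on $\{(x,y)\in\mathbb{Z}^2: x\ge1,y\ge1\}$ with $(X_0,Y_0)=(x_0,y_0)$ and transition probabilities: from $(x,y)$ it moves to $(x+1,y)$ with probability $\frac{rx}{rx+y}$ and to $(x,y+1)$ with probability $\frac{y}{rx+y}$. $(x)_k=\prod_{i=0}^{k-1}(x+i)$ denotes the Pochhammer symbol (with $(x)_0=1$). *)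

(* Defs.v *)
From Stdlib Require Import Reals Lra Lia.
Open Scope R_scope.

(* States (x,y) with x,y >= 1 are represented by pairs of naturals;
   positivity is imposed as a hypothesis on the start state and is preserved. *)

Definition ca_step (r : R) (x y x' y' : nat) : R :=
  if (Nat.eqb x' (S x) && Nat.eqb y' y)%bool then r * INR x / (r * INR x + INR y)
  else if (Nat.eqb x' x && Nat.eqb y' (S y))%bool then INR y / (r * INR x + INR y)
  else 0.

Fixpoint ca_prob (r : R) (t : nat) (x y x' y' : nat) {struct t} : R :=
  match t with
  | O => if (Nat.eqb x x' && Nat.eqb y y')%bool then 1 else 0
  | S t' => ca_step r x y (S x) y * ca_prob r t' (S x) y x' y'
          + ca_step r x y x (S y) * ca_prob r t' x (S y) x' y'
  end.

Definition p_r (r : R) (x0 y0 x y : nat) : R :=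
  ca_prob r (x + y - x0 - y0)%nat x0 y0 x y.

Fixpoint poch (a : R) (k : nat) : R :=
  match k with
  | O => 1
  | S k' => poch a k' * (a + INR k')
  end.

(* Main.v *)
Require Import Defs.
From Stdlib Require Import Reals Lra Lia.
Open Scope R_scope.

Lemma step_x r x y : ca_step r x y (S x) y = r*INR x/(r*INR x+INR y).
Proof. unfold ca_step; rewrite !Nat.eqb_refl; reflexivity. Qed.

Lemma step_y r x y : ca_step r x y x (S y) = INR y/(r*INR x+INR y).
Proof.
  unfold ca_step. replace (Nat.eqb x (S x)) with false.
  - rewrite !Nat.eqb_refl; reflexivity.
  - symmetry; apply Nat.eqb_neq; lia.
Qed.

Lemma cp_S r t x y x' y' : ca_prob r (S t) x y x' y' =
  r*INR x/(r*INR x+INR y) * ca_prob r t (S x) y x' y'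
  + INR y/(r*INR x+INR y) * ca_prob r t x (S y) x' y'.
Proof. rewrite <- step_x, <- step_y; reflexivity. Qed.

Lemma cp_zero r t : forall x y x' y', (x' < x)%nat \/ (y' < y)%nat ->
  ca_prob r t x y x' y' = 0.
Proof.
  induction t; intros x y x' y' H.
  - simpl. destruct (Nat.eqb_spec x x'), (Nat.eqb_spec y y'); simpl; try lra; lia.
  - rewrite cp_S, !IHt by lia; ring.
Qed.

Lemma cp_last r t : forall x y x' y',
  ca_prob r (S t) x y (S x') (S y') =
  ca_prob r t x y x' (S y') * (r*INR x'/(r*INR x'+INR (S y')))
  + ca_prob r t x y (S x') y' * (INR y'/(r*INR (S x')+INR y')).
Proof.
  induction t; intros x y x' y'.
  - rewrite cp_S. simpl ca_prob.
    destruct (Nat.eqb_spec x x'), (Nat.eqb_spec y (S y')), (Nat.eqb_spec x (S x')), (Nat.eqb_spec y y'); cbn [andb]; subst; try (exfalso; lia); ring.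
  - rewrite (cp_S r (S t) x y). rewrite !IHt. rewrite !(cp_S r t x y). ring.
Qed.

Section Q.
Variables (r : R) (a b : nat).
Definition q k h := ca_prob r (k+h) (S a) (S b) (S a + k) (S b + h).

Lemma q00 : q 0 0 = 1.
Proof. unfold q. rewrite !Nat.add_0_r. simpl. rewrite !Nat.eqb_refl. reflexivity. Qed.

Lemma qL1 k : q (S k) 0 = q k 0 * (r*INR (S a+k)%nat/(r*INR (S a+k)%nat+INR (S b))).
Proof.
  unfold q. replace (S k + 0)%nat with (S (k+0)) by lia.
  replace (S a + S k)%nat with (S (S a + k)) by lia.
  replace (S b + 0)%nat with (S b) by lia.
  rewrite cp_last. rewrite (cp_zero r _ _ _ _ b) by lia. ring.
Qed.

Lemma qL2 h : q 0 (S h) = q 0 h * (INR (S b + h)%nat/(r*INR (S a)+INR (S b + h)%nat)).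
Proof.
  unfold q. replace (0 + S h)%nat with (S (0+h)) by lia.
  replace (S b + S h)%nat with (S (S b + h)) by lia.
  replace (S a + 0)%nat with (S a) by lia.
  rewrite cp_last. rewrite (cp_zero r _ _ _ a) by lia. ring.
Qed.

Lemma qL3 k h : q (S k) (S h) =
  q k (S h) * (r*INR (S a+k)%nat/(r*INR (S a+k)%nat+INR (S (S b + h))))
  + q (S k) h * (INR (S b + h)%nat/(r*INR (S (S a + k))+INR (S b + h)%nat)).
Proof.
  unfold q. replace (S k + S h)%nat with (S (k + S h)) by lia.
  replace (S b + S h)%nat with (S (S b + h)) by lia.
  replace (S a + S k)%nat with (S (S a + k)) by lia.
  rewrite cp_last.
  replace (S k + h)%nat with (k + S h)%nat by lia. ring.
Qed.
End Q.

Lemma poch_pos c k : 0 < c -> 0 < poch c k.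
Proof.
  intro Hc; induction k; simpl; [lra|].
  pose proof (pos_INR k). apply Rmult_lt_0_compat; lra.
Qed.

Lemma main r a b : 1 <= r -> forall k h,
  q r a b k h <= poch (INR (S a)) k * poch (INR (S b)) h /
    (poch (/ r) k * poch (r * INR (S a) + INR (S b)) h).
Proof.
  intros Hr.
  set (X := INR (S a)). set (Y := INR (S b)).
  assert (HX : 1 <= X) by (unfold X; rewrite S_INR; pose proof (pos_INR a); lra).
  assert (HY : 1 <= Y) by (unfold Y; rewrite S_INR; pose proof (pos_INR b); lra).
  assert (Hir : 0 < / r) by (apply Rinv_0_lt_compat; lra).
  assert (HrX : 1 <= r * X) by nra.
  induction k as [|k IHk]; intro h; induction h as [|h IHh].
  - rewrite q00. simpl. lra.
  - rewrite qL2. fold X Y.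
    eapply Rle_trans.
    { apply Rmult_le_compat_r; [|exact IHh].
      rewrite plus_INR. fold Y. pose proof (pos_INR h).
      apply Rle_mult_inv_pos; nra. }
    rewrite plus_INR. fold Y. cbn [poch].
    pose proof (pos_INR h).
    pose proof (poch_pos Y h ltac:(lra)).
    pose proof (poch_pos (r*X+Y) h ltac:(lra)).
    right. field. repeat split; nra.
  - rewrite qL1.
    eapply Rle_trans.
    { apply Rmult_le_compat_r; [|exact (IHk 0%nat)].
      rewrite plus_INR. fold X Y. pose proof (pos_INR k).
      apply Rle_mult_inv_pos; nra. }
    rewrite plus_INR. fold X Y. cbn [poch].
    pose proof (pos_INR k).
    set (P := poch X k). set (U := poch (/r) k).
    assert (0 < P) by (apply poch_pos; lra).
    assert (0 < U) by (apply poch_pos; lra).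
    assert (HrK : 0 <= r * INR k) by nra.
    assert (Hw : r * (/ r + INR k) = 1 + r * INR k) by (field; lra).
    match goal with |- ?L <= ?R =>
      assert (Hd : R - L = P * (X + INR k) * (r*X + Y - 1) /
                 (U * (/ r + INR k) * (r * (X + INR k) + Y)))
    end.
    { field. repeat split; nra. }
    assert (0 <= P * (X + INR k) * (r*X + Y - 1) /
                 (U * (/ r + INR k) * (r * (X + INR k) + Y))).
    { apply Rle_mult_inv_pos.
      - apply Rmult_le_pos; [apply Rmult_le_pos|]; nra.
      - apply Rmult_lt_0_compat; [apply Rmult_lt_0_compat|]; nra. }
    lra.
  - rewrite qL3.
    pose proof (pos_INR k). pose proof (pos_INR h).
    assert (HrK : 0 <= r * INR k) by nra.
    eapply Rle_trans.
    { apply Rplus_le_compat.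
      - apply Rmult_le_compat_r; [|exact (IHk (S h))].
        rewrite S_INR, !plus_INR. fold X Y.
        apply Rle_mult_inv_pos; nra.
      - apply Rmult_le_compat_r; [|exact IHh].
        rewrite (S_INR (S a + k)), !plus_INR. fold X Y.
        apply Rle_mult_inv_pos; nra. }
    rewrite (S_INR (S b + h)), (S_INR (S a + k)), !plus_INR. fold X Y. cbn [poch].
    set (P := poch X k). set (U := poch (/r) k).
    set (Q := poch Y h). set (V := poch (r*X+Y) h).
    assert (0 < P) by (apply poch_pos; lra).
    assert (0 < U) by (apply poch_pos; lra).
    assert (0 < Q) by (apply poch_pos; lra).
    assert (0 < V) by (apply poch_pos; lra).
    assert (Hw : r * (/ r + INR k) = 1 + r * INR k) by (field; lra).
    match goal with |- ?L <= ?R =>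
      assert (Hd : R - L = P * Q * (X + INR k) * (Y + INR h) * (r - 1) /
                 (U * V * (/ r + INR k) * (r * (X + INR k + 1) + (Y + INR h))
                   * (r * (X + INR k) + (Y + INR h + 1))))
    end.
    { field. repeat split; nra. }
    assert (0 <= P * Q * (X + INR k) * (Y + INR h) * (r - 1) /
                 (U * V * (/ r + INR k) * (r * (X + INR k + 1) + (Y + INR h))
                   * (r * (X + INR k) + (Y + INR h + 1)))).
    { apply Rle_mult_inv_pos.
      - repeat apply Rmult_le_pos; nra.
      - repeat apply Rmult_lt_0_compat; nra. }
    lra.
Qed.

Theorem lemma2 (r : R) (x0 y0 k h : nat) :
  1 <= r -> (1 <= x0)%nat -> (1 <= y0)%nat ->
  p_r r x0 y0 (x0 + k) (y0 + h) <=
  (poch (INR x0) k * poch (INR y0) h) /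
  (poch (/ r) k * poch (r * INR x0 + INR y0) h).
Proof.
  intros Hr Hx Hy.
  destruct x0 as [|a]; [lia|]. destruct y0 as [|b]; [lia|].
  unfold p_r.
  replace (S a + k + (S b + h) - S a - S b)%nat with (k + h)%nat by lia.
  exact (main r a b Hr k h).
Qed.
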